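(* A tree $T$ is strong cop-win if and only if $T$ is a caterpillar.
   Context: A caterpillar is a tree such that removing all its leaves leaves a path (possibly empty or a single vertex). All graphs are finite and reflexive (a player may stay in place). The game of $k$ cops and $m$ robbers on $G$: in round 0 the cops first choose starting vertices, then the robbers choose theirs. In each round $i\geq 1$, all cops move (each to an adjacent vertex or staying), then all robbers move likewise. Several players may occupy the same vertex. Whenever a cop and some robbers occupy the same vertex, those robbers are captured and take no further part in the game. Both sides have full information. The cops win if all robbers are captured after finitely many rounds. For a cop-win graph $G$, $\mathrm{capt}(G,m)$ is the index of the round in which the last robber is captured when one cop plays to minimize this index and $m$ robbers play to maximize it. $G$ is strong cop-win if $\lim_{m\to\infty}\mathrm{capt}(G,m)$ exists (and is finite). *)

(* Defs.v *)
From mathcomp Require Import all_boot.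
Set Implicit Arguments. Unset Strict Implicit. Unset Printing Implicit Defensive.

Section Graphs.
Variables (T : finType) (e : rel T).

(* The graph is a simple graph (e symmetric, irreflexive) on the finite
   vertex type T; the game graph is its reflexive closure. *)
Definition adjr (x y : T) : bool := (x == y) || e x y.

Definition is_tree : Prop :=
  0 < #|T| /\
  (forall x y : T, connect e x y) /\
  (forall p : seq T, uniq p -> 3 <= size p -> ~~ cycle e p).

Definition deg (x : T) : nat := #|[set y | e x y]|.
Definition is_leaf (x : T) : bool := deg x == 1.

(* Removing all leaves leaves a path (possibly empty or a single vertex):
   the subgraph induced on the non-leaves is a path graph, listed by p. *)
Definition caterpillar : Prop :=
  exists p : seq T,
    [/\ uniq p,
        (forall x, (x \in p) = ~~ is_leaf x) &
        (forall x y, x \in p -> y \in p ->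
           e x y = (index y p == (index x p).+1) || (index x p == (index y p).+1))].

(* One cop against m robbers.  A robber state is an ffun 'I_m -> option T,
   None meaning captured. *)
Section Game.
Variable m : nat.
Definition rstate := {ffun 'I_m -> option T}.

Definition after_round (c' : T) (R : rstate) (M : {ffun 'I_m -> T}) : rstate :=
  [ffun i => match R i with
             | Some v => if v == c' then None
                         else if M i == c' then None else Some (M i)
             | None => None
             end].

Definition valid_rmove (c' : T) (R : rstate) (M : {ffun 'I_m -> T}) : bool :=
  [forall i, match R i with
             | Some v => (v != c') ==> adjr v (M i)
             | None => true
             end].

Definition all_captured (R : rstate) : bool := [forall i, R i == None].

Fixpoint cop_wins (k : nat) (c : T) (R : rstate) : bool :=
  match k with
  | 0 => all_captured R
  | k'.+1 => all_captured R ||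
      [exists c', adjr c c' &&
         [forall M, valid_rmove c' R M ==> cop_wins k' c' (after_round c' R M)]]
  end.

Definition initial_state (c0 : T) (R0 : {ffun 'I_m -> T}) : rstate :=
  [ffun i => if R0 i == c0 then None else Some (R0 i)].

Definition capt_le (k : nat) : bool :=
  [exists c0, [forall R0, cop_wins k c0 (initial_state c0 R0)]].

Definition capt_is (k : nat) : bool :=
  capt_le k && ((k == 0) || ~~ capt_le k.-1).
End Game.

(* lim_{m -> oo} capt(G,m) exists and is finite; for a nat-valued sequence
   this means it is eventually constant. *)
Definition strong_cop_win : Prop :=
  exists L M : nat, forall m, M <= m -> capt_is m L.

End Graphs.

(* Main.v *)
Require Import Defs.
From mathcomp Require Import all_boot zify.
From Stdlib Require Import Lia Classical.
Set Implicit Arguments. Unset Strict Implicit. Unset Printing Implicit Defensive.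

Definition adjYn (i j : nat) : bool :=
  (i == j) || (((i, j) \in [:: (0,1); (0,2); (0,3); (1,4); (2,5); (3,6)])
            || ((j, i) \in [:: (0,1); (0,2); (0,3); (1,4); (2,5); (3,6)])).
Definition transN (s t : nat) : bool := if s < 7 then (if t < 7 then adjYn s t else true) else true.
Definition getW (W : seq bool) j := nth false W j.
Definition spreadN (t : nat) (W : seq bool) : seq bool :=
  [seq (t != j) && has (fun j0 => getW W j0 && (t != j0) && adjYn j0 j) (iota 0 7) | j <- iota 0 7].
Definition basisN : seq (nat * seq nat) :=
 [:: (0, [:: 1;2;4;5]); (0, [:: 1;3;4;6]); (0, [:: 2;3;5;6]);
     (1, [:: 0;2;3;5;6]); (1, [:: 0;2;4;5]); (1, [:: 0;3;4;6]);
     (2, [:: 0;1;3;4;6]); (2, [:: 0;1;4;5]); (2, [:: 0;3;5;6]);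
     (3, [:: 0;1;2;4;5]); (3, [:: 0;1;4;6]); (3, [:: 0;2;5;6]);
     (4, [:: 0;1;2;3;5]); (4, [:: 0;1;2;3;6]);
     (5, [:: 0;1;2;3;4]); (5, [:: 0;1;2;3;6]);
     (6, [:: 0;1;2;3;4]); (6, [:: 0;1;2;3;5]);
     (7, [:: 0;1;2;4;5]); (7, [:: 0;1;3;4;6]); (7, [:: 0;2;3;5;6])].
Definition mkW (b : seq nat) : seq bool := [seq j \in b | j <- iota 0 7].
Definition GoodN (s : nat) (W : seq bool) : bool :=
  has (fun b => (b.1 == s) && all (getW W) b.2) basisN.

Lemma closureN : all (fun b => all (fun t => transN b.1 t ==> GoodN t (spreadN t (mkW b.2))) (iota 0 8)) basisN.
Proof. by vm_compute. Qed.
Lemma neN : all (fun b => has (fun k => k < 7) b.2) basisN.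
Proof. by vm_compute. Qed.
Lemma initN : all (fun s => GoodN s [seq s != j | j <- iota 0 7]) (iota 0 8).
Proof. by vm_compute. Qed.
Lemma rangeN : all (fun b => all (fun k => k < 7) b.2) basisN.
Proof. by vm_compute. Qed.

Lemma getW_map (f : nat -> bool) j : j < 7 -> getW [seq f i | i <- iota 0 7] j = f j.
Proof. by move=> h; rewrite /getW (nth_map 0) ?size_iota // nth_iota. Qed.

Lemma GoodN_mono s W W' : (forall j, j < 7 -> getW W j -> getW W' j) -> GoodN s W -> GoodN s W'.
Proof.
move=> H /hasP[b bin /andP[h /allP F]]; apply/hasP; exists b => //; rewrite h /=.
apply/allP=> k kb; apply: H; last exact: F.
by have := allP rangeN b bin => /allP; apply.
Qed.

Lemma spreadN_mono t W W' : (forall j, j < 7 -> getW W j -> getW W' j) ->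
  forall j, j < 7 -> getW (spreadN t W) j -> getW (spreadN t W') j.
Proof.
move=> H j hj; rewrite /spreadN !getW_map // => /andP[-> /hasP[j0 j0in /andP[/andP[w1 w2] w3]]].
apply/hasP; exists j0 => //; rewrite w2 w3 H //.
by move: j0in; rewrite mem_iota.
Qed.

Lemma GoodN_step s t W : GoodN s W -> transN s t -> t < 8 -> GoodN t (spreadN t W).
Proof.
move=> /hasP[b bin /andP[/eqP h /allP F]] tr t8.
have := allP closureN b bin => /allP/(_ t); rewrite mem_iota /= t8 h tr /= => /(_ isT).
apply: GoodN_mono; apply: spreadN_mono => j hj; rewrite /mkW getW_map //; exact: F.
Qed.

Lemma GoodN_ne s W : GoodN s W -> exists2 j, j < 7 & getW W j.
Proof.
move=> /hasP[b bin /andP[_ /allP F]]; have /hasP[k kb k7] := allP neN b bin.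
by exists k => //; apply: F.
Qed.

Lemma GoodN_init s : s < 8 -> GoodN s [seq s != j | j <- iota 0 7].
Proof. by move=> h; apply: (allP initN); rewrite mem_iota. Qed.

Section Generic.
Variables (T : finType) (e : rel T).

Lemma cop_wins_S m k c (R : rstate T m) : cop_wins e k c R -> cop_wins e k.+1 c R.
Proof.
elim: k c R => [|k IH] c R /=; first by move=> ->.
case/orP=> [->//|/existsP[c' /andP[a /forallP H]]].
apply/orP; right; apply/existsP; exists c'; rewrite a /=.
apply/forallP=> M; apply/implyP=> v; apply: IH; exact: (implyP (H M) v).
Qed.

Lemma cop_wins_le m k k' c (R : rstate T m) : k <= k' -> cop_wins e k c R -> cop_wins e k' c R.
Proof.
move=> /subnK <-; elim: (k' - k) => [//|d IH] H; rewrite addSn; exact/cop_wins_S/IH.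
Qed.

Section Pull.
Variables (m n : nat) (g : 'I_n -> 'I_m).
Hypothesis gsurj : forall j, exists i, g i = j.
Definition pull (A : Type) (R : {ffun 'I_m -> A}) : {ffun 'I_n -> A} := [ffun i => R (g i)].

Lemma after_pull c' (R : rstate T m) M :
  after_round c' (pull R) (pull M) = pull (after_round c' R M).
Proof. by apply/ffunP=> i; rewrite !ffunE. Qed.

Lemma valid_pull c' (R : rstate T m) M :
  valid_rmove e c' R M -> valid_rmove e c' (pull R) (pull M).
Proof. by move/forallP=> H; apply/forallP=> i; rewrite !ffunE; apply: H. Qed.

Lemma allc_pull (R : rstate T m) : all_captured (pull R) -> all_captured R.
Proof.
move/forallP=> H; apply/forallP=> j; have [i <-] := gsurj j.
by have := H i; rewrite ffunE.
Qed.

Lemma cop_wins_pull k c (R : rstate T m) : cop_wins e k c (pull R) -> cop_wins e k c R.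
Proof.
elim: k c R => [|k IH] c R /=; first exact: allc_pull.
case/orP=> [/allc_pull->//|/existsP[c' /andP[a /forallP H]]].
apply/orP; right; apply/existsP; exists c'; rewrite a /=.
apply/forallP=> M; apply/implyP=> v; apply: IH.
by rewrite -after_pull; apply: (implyP (H (pull M))); apply: valid_pull.
Qed.

Lemma init_pull c0 (R0 : {ffun 'I_m -> T}) :
  initial_state c0 (pull R0) = pull (initial_state c0 R0).
Proof. by apply/ffunP=> i; rewrite !ffunE. Qed.
End Pull.

Lemma capt_le_mono m m' k : 0 < m -> m <= m' -> capt_le e m' k -> capt_le e m k.
Proof.
move=> m0 le /existsP[c0 /forallP H]; apply/existsP; exists c0; apply/forallP=> R0.
pose x0 : 'I_m := Ordinal m0.
pose g (i : 'I_m') : 'I_m := insubd x0 (val i).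
have gs : forall j, exists i, g i = j.
  move=> j; exists (widen_ord le j); apply: val_inj; rewrite /g /= insubdK //.
  exact: (ltn_ord j).
apply: (cop_wins_pull gs); rewrite -init_pull; exact: H.
Qed.

Lemma capt_le_k m k k' : k <= k' -> capt_le e m k -> capt_le e m k'.
Proof.
move=> le /existsP[c0 /forallP H]; apply/existsP; exists c0; apply/forallP=> R0.
exact: cop_wins_le le (H R0).
Qed.

Lemma capt_le0 (x : T) k : capt_le e 0 k.
Proof.
apply/existsP; exists x; apply/forallP=> R0; apply: (@cop_wins_le _ 0) => //=.
by apply/forallP=> -[].
Qed.

Lemma mono_evconst (f : nat -> nat) d :
  (forall a b, a <= b -> f a <= f b) -> (forall a, f a <= f 0 + d) ->
  exists L M, forall a, M <= a -> f a = L.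
Proof.
elim: d f => [|d IH] f mono bnd.
  by exists (f 0), 0 => a _; apply/eqP; rewrite eqn_leq (mono 0 a) // andbT; have := bnd a; rewrite addn0.
case: (classic (exists a, f 0 + d < f a)) => [[a0 Ha0]|N].
  exists (f a0), a0 => a le; apply/eqP; rewrite eqn_leq (mono a0 a) // andbT.
  have := bnd a; rewrite addnS => h; exact: leq_trans h Ha0.
apply: IH mono _ => a; rewrite leqNgt; apply/negP => h; apply: N; by exists a.
Qed.

End Generic.

Section Assemble.
Variables (T : finType) (e : rel T).

Lemma strong_of_bound (x : T) B : (forall m, capt_le e m B) -> strong_cop_win e.
Proof.
move=> HB.
have ex m : exists k, capt_le e m k by exists B.
pose f m := ex_minn (ex m).
have fP m : capt_le e m (f m) by rewrite /f; case: ex_minnP.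
have fmin m k : capt_le e m k -> f m <= k by rewrite /f; case: ex_minnP => n _ /(_ k).
have f0 : f 0 = 0 by apply/eqP; rewrite -leqn0; apply: fmin; exact: capt_le0.
have mono a b : a <= b -> f a <= f b.
  case: a => [|a] le; first by rewrite f0.
  by apply: fmin; apply: (capt_le_mono _ le); [|exact: fP].
have bnd a : f a <= f 0 + B by rewrite f0; exact: fmin.
have [L [M HLM]] := @mono_evconst f B mono bnd.
exists L, M => m Mm; rewrite /capt_is -(HLM m Mm) fP /=.
case: (f m) (fmin m) => [//|k] Hk /=; apply/negP => /Hk; by rewrite ltnn.
Qed.

Lemma not_strong : (forall k, exists m, 0 < m /\ ~~ capt_le e m k) -> ~ strong_cop_win e.
Proof.
move=> H [L [M HLM]]; have [m [m0 Hm]] := H L.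
have := HLM (maxn m M) (leq_maxr _ _); case/andP=> Hc _.
by move: Hm; rewrite (capt_le_mono m0 (leq_maxl m M) Hc).
Qed.
End Assemble.

Section Robbers.
Variables (T : finType) (e : rel T) (yv : nat -> T).
Hypothesis yinj : forall j j', j < 7 -> j' < 7 -> yv j = yv j' -> j = j'.
Hypothesis yedge : forall j j', j < 7 -> j' < 7 -> adjYn j j' -> adjr e (yv j) (yv j').
Hypothesis ynon : forall j j', j < 7 -> j' < 7 -> adjr e (yv j) (yv j') -> adjYn j j'.

Definition absc (c : T) : nat := if [pick j : 'I_7 | yv j == c] is Some j then val j else 7.

Lemma absc_lt c : absc c < 8.
Proof. by rewrite /absc; case: pickP => // j _; apply: ltn_trans (ltn_ord j) _. Qed.

Lemma abscE c j : j < 7 -> (absc c == j) = (yv j == c).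
Proof.
move=> hj; rewrite /absc; case: pickP => [j' /eqP <-|H].
  apply/eqP/eqP => [<-//|/yinj ->//]; exact: ltn_ord.
have := H (Ordinal hj) => /= ->; by rewrite gtn_eqF.
Qed.

Lemma transOK c c' : adjr e c c' -> transN (absc c) (absc c').
Proof.
move=> a; rewrite /transN; case: ifP => // h1; case: ifP => // h2.
apply: ynon => //.
by move: (eqxx (absc c)) (eqxx (absc c')); rewrite {1}abscE // {1}abscE // => /eqP-> /eqP->.
Qed.

Variable n : nat.
Definition FF := {ffun 'I_n.+1 -> 'I_7}.
Definition mm := #|FF|.
Definition gg (i : 'I_mm) : FF := enum_val i.

Definition Inv t (W : seq bool) (R : rstate T mm) :=
  forall j, j < 7 -> getW W j -> exists f : FF,
    forall i : 'I_mm, (forall s : 'I_n.+1, s <= t -> gg i s = f s) -> R i = Some (yv j).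

Definition Mv t (c' : T) (R : rstate T mm) : {ffun 'I_mm -> T} :=
  [ffun i => if R i is Some v then (let y := yv (gg i (inord t.+1)) in if adjr e v y then y else v) else c'].

Lemma Mv_valid t c' R : valid_rmove e c' R (Mv t c' R).
Proof.
apply/forallP=> i; rewrite ffunE; case: (R i) => // v; apply/implyP=> _ /=.
by case: ifP => // _; rewrite /adjr eqxx.
Qed.

Lemma Inv_step t W R c' : t.+1 < n.+1 -> Inv t W R ->
  Inv t.+1 (spreadN (absc c') W) (after_round c' R (Mv t c' R)).
Proof.
move=> tL HI j hj; rewrite /spreadN getW_map // => /andP[nj /hasP[j0 j0in /andP[/andP[w0 nj0] a0]]].
have hj0 : j0 < 7 by move: j0in; rewrite mem_iota.
have [f0 Hf0] := HI j0 hj0 w0.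
exists [ffun s : 'I_n.+1 => if val s == t.+1 then Ordinal hj else f0 s] => i Hi.
have Ri : R i = Some (yv j0).
  apply: Hf0 => s st; have := Hi s (leqW st); rewrite ffunE.
  by rewrite (ltn_eqF (leq_ltn_trans st (ltnSn t))).
have gi : val (gg i (inord t.+1)) = j.
  have vi : nat_of_ord (inord t.+1 : 'I_n.+1) = t.+1 by rewrite inordK.
  by rewrite Hi ?vi // ffunE /= vi eqxx.
rewrite !ffunE Ri /= gi yedge // -(abscE c' hj0) (negbTE nj0).
by rewrite -(abscE c' hj) (negbTE nj).
Qed.

Lemma Inv_ne t W R s : Inv t W R -> GoodN s W -> ~~ all_captured R.
Proof.
move=> HI /GoodN_ne[j hj w]; have [f Hf] := HI j hj w.
apply/forallPn; exists (enum_rank f); rewrite Hf // => s0 _.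
by rewrite /gg enum_rankK.
Qed.

Lemma robbers_survive k : forall t c W R, t + k < n.+1 -> GoodN (absc c) W -> Inv t W R ->
  ~~ cop_wins e k c R.
Proof.
elim: k => [|k IH] t c W R tk G HI /=; first exact: Inv_ne HI G.
rewrite negb_or (Inv_ne HI G) /=; apply/existsPn => c'; apply/nandP.
case: (boolP (adjr e c c')) => a; [right|by left].
apply/forallPn; exists (Mv t c' R); rewrite negb_imply Mv_valid /=.
apply: (IH t.+1 c' (spreadN (absc c') W)).
- by rewrite addSnnS.
- by apply: GoodN_step G (transOK a) (absc_lt c').
- by apply: Inv_step => //; apply: leq_ltn_trans tk; rewrite addnS ltnS leq_addr.
Qed.
End Robbers.

Section Robbers2.
Variables (T : finType) (e : rel T) (yv : nat -> T).
Hypothesis yinj : forall j j', j < 7 -> j' < 7 -> yv j = yv j' -> j = j'.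
Hypothesis yedge : forall j j', j < 7 -> j' < 7 -> adjYn j j' -> adjr e (yv j) (yv j').
Hypothesis ynon : forall j j', j < 7 -> j' < 7 -> adjr e (yv j) (yv j') -> adjYn j j'.

Lemma robbers_capt k : exists m, 0 < m /\ ~~ capt_le e m k.
Proof.
exists (mm k); split.
  by apply/card_gt0P; exists [ffun => ord0].
apply/existsPn => c0; apply/forallPn.
exists [ffun i => yv (gg i (inord 0))].
apply: (@robbers_survive T e yv yinj yedge ynon k k 0 c0 [seq absc yv c0 != j | j <- iota 0 7]).
- by [].
- by apply: GoodN_init; exact: absc_lt.
move=> j hj; rewrite getW_map // => nj.
exists [ffun => Ordinal hj] => i Hi.
have g0 : val (gg i (inord 0)) = j by rewrite Hi ?ffunE // inordK.
by rewrite !ffunE g0 -(abscE yinj c0 hj) (negbTE nj).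
Qed.
End Robbers2.

Section Claw.
Variables (T : finType) (e : rel T).
Hypothesis sym : symmetric e.
Hypothesis irr : irreflexive e.
Hypothesis acyc : forall p : seq T, uniq p -> 3 <= size p -> ~~ cycle e p.

Lemma cyc3 x y z : x != y -> x != z -> y != z -> e x y -> e y z -> e z x -> False.
Proof.
move=> d1 d2 d3 h1 h2 h3; have := acyc (p := [:: x; y; z]).
by rewrite /= !inE !negb_or d1 d2 d3 h1 h2 h3 => /(_ isT isT).
Qed.
Lemma cyc4 x y z w : x != y -> x != z -> x != w -> y != z -> y != w -> z != w ->
  e x y -> e y z -> e z w -> e w x -> False.
Proof.
move=> d1 d2 d3 d4 d5 d6 h1 h2 h3 h4; have := acyc (p := [:: x; y; z; w]).
by rewrite /= !inE !negb_or d1 d2 d3 d4 d5 d6 h1 h2 h3 h4 => /(_ isT isT).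
Qed.
Lemma cyc5 x y z w v : x != y -> x != z -> x != w -> x != v -> y != z -> y != w -> y != v ->
  z != w -> z != v -> w != v ->
  e x y -> e y z -> e z w -> e w v -> e v x -> False.
Proof.
move=> d1 d2 d3 d4 d5 d6 d7 d8 d9 d10 h1 h2 h3 h4 h5; have := acyc (p := [:: x; y; z; w; v]).
by rewrite /= !inE !negb_or d1 d2 d3 d4 d5 d6 d7 d8 d9 d10 h1 h2 h3 h4 h5 => /(_ isT isT).
Qed.

Lemma neq_of_e x y : e x y -> x != y.
Proof. by apply: contraTneq => ->; rewrite irr. Qed.

Variables (o a b c a' b' c' : T).
Hypotheses (eoa : e o a) (eob : e o b) (eoc : e o c) (eaa : e a a') (ebb : e b b') (ecc : e c c').
Hypotheses (dab : a != b) (dac : a != c) (dbc : b != c) (doa' : o != a') (dob' : o != b') (doc' : o != c').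

Let doa := neq_of_e eoa.
Let dob := neq_of_e eob.
Let doc := neq_of_e eoc.
Let daa := neq_of_e eaa.
Let dbb := neq_of_e ebb.
Let dcc := neq_of_e ecc.

Lemma d3 x y z : o != x -> o != y -> x != y -> e o x -> e o y -> e y z -> x != z.
Proof.
move=> h1 h2 h3 f1 f2 f3; apply/eqP=> xz; subst z.
by apply: (cyc3 h2 h1 _ f2 f3); [rewrite eq_sym | rewrite sym].
Qed.

Let dba : b != a. Proof. by rewrite eq_sym. Qed.
Let dca : c != a. Proof. by rewrite eq_sym. Qed.
Let dcb : c != b. Proof. by rewrite eq_sym. Qed.
Let dab' : a != b' := d3 doa dob dab eoa eob ebb.
Let dac' : a != c' := d3 doa doc dac eoa eoc ecc.
Let dba' : b != a' := d3 dob doa dba eob eoa eaa.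
Let dbc' : b != c' := d3 dob doc dbc eob eoc ecc.
Let dca' : c != a' := d3 doc doa dca eoc eoa eaa.
Let dcb' : c != b' := d3 doc dob dcb eoc eob ebb.

Lemma d4 x y x' y' : o != x -> o != y -> x != y -> o != x' -> x != x' -> y != x' ->
  e o x -> e o y -> e x x' -> e y y' -> x' != y'.
Proof.
move=> h1 h2 h3 h4 h5 h6 f1 f2 f3 f4; apply/eqP=> xy; subst y'.
apply: (cyc4 h1 h4 h2 h5 h3 _ f1 f3 _ _); [by rewrite eq_sym|by rewrite sym|by rewrite sym].
Qed.
Let da'b' : a' != b' := d4 doa dob dab doa' daa dba' eoa eob eaa ebb.
Let da'c' : a' != c' := d4 doa doc dac doa' daa dca' eoa eoc eaa ecc.
Let db'c' : b' != c' := d4 dob doc dbc dob' dbb dcb' eob eoc ebb ecc.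

Lemma n3 x x' : o != x -> o != x' -> x != x' -> e o x -> e x x' -> e o x' = false.
Proof.
move=> h1 h2 h3 f1 f2; apply/negP => f3; apply: (cyc3 h1 h2 h3 f1 f2); by rewrite sym.
Qed.
Lemma n3b x y : o != x -> o != y -> x != y -> e o x -> e o y -> e x y = false.
Proof.
move=> h1 h2 h3 f1 f2; apply/negP => f3; apply: (cyc3 h1 h2 h3 f1 f3); by rewrite sym.
Qed.
Lemma n4 x y y' : o != x -> o != y' -> o != y -> x != y' -> x != y -> y != y' ->
  e o x -> e o y -> e y y' -> e x y' = false.
Proof.
move=> h1 h2 h3 h4 h5 h6 f1 f2 f3; apply/negP => f4.
apply: (cyc4 h1 h2 h3 h4 h5 _ f1 f4 _ _); [by rewrite eq_sym|by rewrite sym|by rewrite sym].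
Qed.
Lemma n5 x x' y y' : o != x -> o != x' -> o != y' -> o != y -> x != x' -> x != y' -> x != y ->
  x' != y' -> y != x' -> y != y' ->
  e o x -> e x x' -> e o y -> e y y' -> e x' y' = false.
Proof.
move=> h1 h2 h3 h4 h5 h6 h7 h8 h9 h10 f1 f2 f3 f4; apply/negP => f5.
apply: (cyc5 h1 h2 h3 h4 h5 h6 h7 h8 _ _ f1 f2 f5 _ _).
- by rewrite eq_sym.
- by rewrite eq_sym.
- by rewrite sym.
- by rewrite sym.
Qed.

Definition yv7 (j : nat) : T := nth o [:: o; a; b; c; a'; b'; c'] j.

Lemma y_uniq : uniq [:: o; a; b; c; a'; b'; c'].
Proof.
rewrite /= !inE !negb_or doa dob doc doa' dob' doc' dab dac daa dab' dac' dbc dba' dbb dbc'.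
by rewrite dca' dcb' dcc da'b' da'c' db'c'.
Qed.

Lemma yinj7 j j' : j < 7 -> j' < 7 -> yv7 j = yv7 j' -> j = j'.
Proof. move=> h h'; rewrite /yv7 => /eqP; rewrite nth_uniq //; [by move/eqP| exact: y_uniq]. Qed.

Let na'b := n3b doa dob dab eoa eob.
Let nac := n3b doa doc dac eoa eoc.
Let nbc := n3b dob doc dbc eob eoc.
Let noa' := n3 doa doa' daa eoa eaa.
Let nob' := n3 dob dob' dbb eob ebb.
Let noc' := n3 doc doc' dcc eoc ecc.
Let nab' := n4 doa dob' dob dab' dab dbb eoa eob ebb.
Let nac' := n4 doa doc' doc dac' dac dcc eoa eoc ecc.
Let nba' := n4 dob doa' doa dba' dba daa eob eoa eaa.
Let nbc' := n4 dob doc' doc dbc' dbc dcc eob eoc ecc.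
Let nca' := n4 doc doa' doa dca' dca daa eoc eoa eaa.
Let ncb' := n4 doc dob' dob dcb' dcb dbb eoc eob ebb.
Let na'b' := n5 doa doa' dob' dob daa dab' dab da'b' dba' dbb eoa eaa eob ebb.
Let na'c' := n5 doa doa' doc' doc daa dac' dac da'c' dca' dcc eoa eaa eoc ecc.
Let nb'c' := n5 dob dob' doc' doc dbb dbc' dbc db'c' dcb' dcc eob ebb eoc ecc.


Lemma ynon7 j j' : j < 7 -> j' < 7 -> adjr e (yv7 j) (yv7 j') -> adjYn j j'.
Proof.
move=> h h'; rewrite /adjr; case: j h => [|[|[|[|[|[|[|//]]]]]]] _; case: j' h' => [|[|[|[|[|[|[|//]]]]]]] _ //.
all: rewrite /yv7 /=.
all: rewrite ?(negbTE doa') ?(negbTE dob') ?(negbTE doc') ?(negbTE dab) ?(negbTE dac) ?(negbTE dbc).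
all: rewrite ?(negbTE dab') ?(negbTE dac') ?(negbTE dba') ?(negbTE dbc') ?(negbTE dca') ?(negbTE dcb').
all: rewrite ?(negbTE da'b') ?(negbTE da'c') ?(negbTE db'c').
all: rewrite ?(negbTE dba) ?(negbTE dca) ?(negbTE dcb).
all: rewrite ?na'b ?nac ?nbc ?noa' ?nob' ?noc' ?nab' ?nac' ?nba' ?nbc' ?nca' ?ncb' ?na'b' ?na'c' ?nb'c'.
all: try by [].
all: try rewrite eq_sym; rewrite sym.
all: rewrite ?(negbTE doa') ?(negbTE dob') ?(negbTE doc') ?(negbTE dab) ?(negbTE dac) ?(negbTE dbc).
all: rewrite ?(negbTE dab') ?(negbTE dac') ?(negbTE dba') ?(negbTE dbc') ?(negbTE dca') ?(negbTE dcb').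
all: rewrite ?(negbTE da'b') ?(negbTE da'c') ?(negbTE db'c').
all: rewrite ?(negbTE dba) ?(negbTE dca) ?(negbTE dcb).
all: rewrite ?na'b ?nac ?nbc ?noa' ?nob' ?noc' ?nab' ?nac' ?nba' ?nbc' ?nca' ?ncb' ?na'b' ?na'c' ?nb'c'.
all: by [].
Qed.

Lemma yedge7 j j' : j < 7 -> j' < 7 -> adjYn j j' -> adjr e (yv7 j) (yv7 j').
Proof.
move=> h h'; rewrite /adjr; case: j h => [|[|[|[|[|[|[|//]]]]]]] _; case: j' h' => [|[|[|[|[|[|[|//]]]]]]] _ //.
all: rewrite /yv7 /= ?eqxx //.
all: rewrite ?eoa ?eob ?eoc ?eaa ?ebb ?ecc ?orbT //.
all: rewrite sym ?eoa ?eob ?eoc ?eaa ?ebb ?ecc ?orbT //.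
Qed.
End Claw.

Lemma ar1 i j sp k : i.+1 < j -> j < sp -> k < i + (j - i).+1 -> k < sp. Proof. lia. Qed.
Lemma ar2 i j : i.+1 < j -> 3 <= (j - i).+1. Proof. lia. Qed.
Lemma ar3 i j st k : i.+1 < j -> j < st.+1 -> k.+1 < (j - i).+1 -> i + k < st. Proof. lia. Qed.
Lemma ar4 i j : i.+1 < j -> i + (j - i).+1.-1 = j. Proof. lia. Qed.
Section Cat.
Variables (T : finType) (e : rel T).
Hypothesis sym : symmetric e.
Hypothesis irr : irreflexive e.
Hypothesis conn : forall x y : T, connect e x y.
Hypothesis acyc : forall p : seq T, uniq p -> 3 <= size p -> ~~ cycle e p.

Notation N := (fun x => ~~ is_leaf e x).

Lemma deg2 x y z : e x y -> e x z -> y != z -> ~~ is_leaf e x.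
Proof.
move=> h1 h2 d; rewrite /is_leaf /deg.
have : #|[set y; z]| <= #|[set u | e x u]|.
  by apply: subset_leq_card; apply/subsetP=> u; rewrite !inE => /orP[]/eqP->.
by rewrite cards2 d => h; apply/negP => /eqP h'; rewrite h' in h.
Qed.

Lemma other_nb x u : e x u -> ~~ is_leaf e x -> exists2 y, e x y & y != u.
Proof.
move=> h nl; case: (boolP [exists y, e x y && (y != u)]) => [/existsP[y /andP[]] | /existsPn H].
  by exists y.
move: nl; rewrite /is_leaf /deg.
have -> : [set y | e x y] = [set u].
  apply/setP => y; rewrite !inE; apply/idP/idP => [hy|/eqP->//].
  by have := H y; rewrite hy /= negbK.
by rewrite cards1.
Qed.

Definition validp (h : T) (t : seq T) := [&& uniq (h :: t), all N (h :: t) & path e h t].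
Definition noext (h : T) (t : seq T) :=
  ~~ [exists w, [&& w \notin h :: t, N w & e w h]] /\
  ~~ [exists w, [&& w \notin h :: t, N w & e (last h t) w]].

Lemma uniq_size_le (s : seq T) : uniq s -> size s <= #|T|.
Proof. by move=> u; rewrite -(card_uniqP u); apply: max_card. Qed.

Lemma maxpath k : forall h t, #|T| - size (h :: t) < k -> validp h t ->
  exists h' t', validp h' t' /\ noext h' t'.
Proof.
elim: k => [//|k IH] h t hk v.
case: (boolP [exists w, [&& w \notin h :: t, N w & e w h]]) => [/existsP[w /and3P[w1 w2 w3]]|E1].
  apply: (IH w (h :: t)).
    have hs : size (w :: h :: t) <= #|T|.
      by apply: uniq_size_le; case/and3P: v => v1 _ _; rewrite /= w1 /=; rewrite /= in v1.
    move: hk hs => /=; lia.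
  by case/and3P: v => v1 v2 v3; rewrite /validp /= w1 w2 w3 /=; rewrite /= in v1 v2; rewrite v1 v2 v3.
case: (boolP [exists w, [&& w \notin h :: t, N w & e (last h t) w]]) => [/existsP[w /and3P[w1 w2 w3]]|E2].
  apply: (IH h (rcons t w)).
    have hs : size (rcons (h :: t) w) <= #|T|.
      by apply: uniq_size_le; case/and3P: v => v1 _ _; rewrite rcons_uniq w1.
    move: hk hs => /=; rewrite !size_rcons /=; lia.
  case/and3P: v => v1 v2 v3; rewrite /validp -rcons_cons rcons_uniq w1 v1 all_rcons w2 v2 /=.
  by rewrite rcons_path v3 w3.
by exists h, t; split => //; split.
Qed.

Lemma exitp (p : seq T) : forall q h, path e h q -> uniq (h :: q) -> h \in p ->
  N (last h q) -> last h q \notin p -> exists u w, [/\ u \in p, w \notin p, N w & e u w].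
Proof.
elim=> [|w q IH] h /=; first by move=> _ _ hp _ /negP.
case/andP=> ehw pq /andP[hq uq] hp Nl lp.
case: (boolP (w \in p)) => wp; first exact: (IH w pq uq wp Nl lp).
exists h, w; split => //.
case: q {IH} pq hq uq Nl lp => [//|z q] /= /andP[ewz _] hq _ _ _.
apply: (deg2 (y := h) (z := z)); first by rewrite sym.
  by [].
by apply/eqP => hz; move: hq; rewrite !inE hz eqxx orbT.
Qed.

Lemma path_nth h t i : path e h t -> i < size t -> e (nth h (h :: t) i) (nth h (h :: t) i.+1).
Proof. by move=> /(pathP h) P hi; apply: P. Qed.

Definition noclaw := forall u a b c, e u a -> e u b -> e u c -> a != b -> a != c -> b != c ->
  N a -> N b -> N c -> False.

Lemma cover h t : validp h t -> noext h t -> noclaw -> forall x, N x -> x \in h :: t.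
Proof.
move=> /and3P[up Np pt] [E1 E2] ncl x Nx; apply/negPn/negP => xp.
have /connectP[q pq xq] := conn h x; subst x.
case/shortenP: pq Nx xp => q' pq' uq' _ Nx xp.
have [u [w [up' wp Nw euw]]] := exitp pq' uq' (mem_head h t) Nx xp.
set p := h :: t in up up' wp Np.
have ki : index u p < size p by rewrite index_mem.
have nu : nth h p (index u p) = u by rewrite nth_index.
case k0 : (index u p) => [|k] in ki nu.
  have uh : u = h by rewrite -nu.
  move: E1 => /existsP; apply; exists w; rewrite wp Nw /= sym -uh; exact: euw.
case: (ltnP k.+1 (size t)) => kt; last first.
  move: E2 => /existsP; apply; exists w; rewrite wp Nw /=.
  have kk : k.+1 = size t by apply/eqP; rewrite eqn_leq kt andbT -ltnS; exact: ki.
  have ul : u = last h t.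
    by rewrite -nu kk; change (nth h (h :: t) (size t) = last h (h :: t)); rewrite -nth_last.
  by rewrite -ul.
have e1 : e u (nth h p k) by rewrite -nu sym; apply: path_nth => //; apply: ltnW.
have e2 : e u (nth h p k.+2) by rewrite -nu; apply: path_nth.
have hk2 : k.+2 < size p by [].
have hk1 : k < size p by apply: ltn_trans hk2; apply: ltn_trans (ltnSn _).
apply: (ncl u _ _ w e1 e2 euw).
- by rewrite nth_uniq // (ltn_eqF (ltn_trans (ltnSn k) (ltnSn k.+1))).
- by apply/eqP => h1; move: wp; rewrite -h1 mem_nth.
- by apply/eqP => h1; move: wp; rewrite -h1 mem_nth.
- by apply: (allP Np); rewrite mem_nth.
- by apply: (allP Np); rewrite mem_nth.
- by [].
Qed.

Lemma cycle_nth x0 (c : seq T) : 0 < size c ->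
  (forall k, k.+1 < size c -> e (nth x0 c k) (nth x0 c k.+1)) ->
  e (nth x0 c (size c).-1) (nth x0 c 0) -> cycle e c.
Proof.
case: c => [//|x c'] _ H1 H2 /=; apply/(pathP x0) => k; rewrite size_rcons ltnS => hk.
rewrite -rcons_cons !nth_rcons /= ltnS.
case: (ltngtP k (size c')) hk => // [hk|->] _.
  by apply: (H1 k); rewrite /= ltnS.
exact: H2.
Qed.

Lemma nonadj h t i j : path e h t -> uniq (h :: t) -> i.+1 < j -> j < size (h :: t) ->
  e (nth h (h :: t) i) (nth h (h :: t) j) = false.
Proof.
set p := h :: t => pt up ij jp; apply/negP => eij.
pose c := [seq nth h p k | k <- iota i (j - i).+1].
have sc : size c = (j - i).+1 by rewrite size_map size_iota.
have nc k : k < size c -> nth h c k = nth h p (i + k).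
  by rewrite sc => hk; rewrite (nth_map 0) ?size_iota // nth_iota.
have U : uniq c.
  rewrite map_inj_in_uniq ?iota_uniq // => k1 k2; rewrite !mem_iota => /andP[_ h1] /andP[_ h2].
  by move/eqP; rewrite nth_uniq //; [move/eqP | exact: (ar1 ij jp h1) | exact: (ar1 ij jp h2)].
have S : 3 <= size c by rewrite sc; exact: ar2 ij.
have C : cycle e c.
  apply: (@cycle_nth h c); first by rewrite sc.
    move=> k hk; rewrite !nc ?(ltnW hk) // addnS; apply: path_nth => //.
    by move: hk; rewrite sc; exact: ar3 ij jp.
  rewrite !nc ?sc // addn0 sym (ar4 ij); exact: eij.
by move: (acyc U S); rewrite C.
Qed.

Lemma edges_p h t : path e h t -> uniq (h :: t) -> forall x y, x \in h :: t -> y \in h :: t ->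
  e x y = (index y (h :: t) == (index x (h :: t)).+1) || (index x (h :: t) == (index y (h :: t)).+1).
Proof.
set p := h :: t => pt up x y xp yp.
have xi : nth h p (index x p) = x by rewrite nth_index.
have yi : nth h p (index y p) = y by rewrite nth_index.
have xs : index x p < size p by rewrite index_mem.
have ys : index y p < size p by rewrite index_mem.
move: xi yi xs ys; set i := index x p; set j := index y p => xi yi xs ys.
apply/idP/idP.
  move=> exy; case: (ltngtP i j) => [ij|ji|ij].
  - case: (boolP (j == i.+1)) => [//|nj].
    have ij' : i.+1 < j by rewrite ltn_neqAle eq_sym nj ij.
    by move: exy; rewrite -xi -yi nonadj.
  - case: (boolP (i == j.+1)) => [|ni]; first by rewrite orbT.
    have ji' : j.+1 < i by rewrite ltn_neqAle eq_sym ni ji.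
    by move: exy; rewrite sym -xi -yi nonadj.
  - by move: exy; rewrite -xi -yi ij irr.
case/orP=> /eqP hij.
  by rewrite -xi -yi hij; apply: path_nth => //; move: ys; rewrite hij.
by rewrite sym -xi -yi hij; apply: path_nth => //; move: xs; rewrite hij.
Qed.

Lemma cat_of_noclaw : noclaw -> caterpillar e.
Proof.
move=> ncl.
case: (boolP [exists x, N x]) => [/existsP[x0 Nx0]|/existsPn H]; last first.
  exists [::]; split => // x; by rewrite in_nil; move: (H x); rewrite negbK => ->.
have v0 : validp x0 [::] by rewrite /validp /= Nx0.
have [h [t [v ne]]] := @maxpath #|T|.+1 x0 [::] (leq_ltn_trans (leq_subr _ _) (ltnSn _)) v0.
case/and3P: (v) => up Np pt.
exists (h :: t); split => //.
  move=> x; apply/idP/idP => [xp|]; first exact: (allP Np).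
  exact: cover.
exact: edges_p.
Qed.
End Cat.

Lemma arB1 a T2 o : a.+1 < o -> (o - a.+2) * (2 * T2 + 1) + 2 * T2 < (o - a.+1) * (2 * T2 + 1).
Proof. nia. Qed.
Lemma arB2 k c : c.+1 < k.+2 -> c + 2 <= k.+2 -> c <= k.
Proof. lia. Qed.

Section CopStrat.
Variables (T : finType) (e : rel T) (x0 : T) (s : seq T) (pos : T -> nat).
Hypothesis sym : symmetric e.
Hypothesis Hpos : forall w, pos w < size s.
Hypothesis Hsp : forall j, j < size s -> pos (nth x0 s j) = j.
Hypothesis Hin : forall w, w \in s -> nth x0 s (pos w) = w.
Hypothesis Hleaf : forall w, w \notin s -> e w (nth x0 s (pos w)) /\ (forall u, e w u -> u = nth x0 s (pos w)).
Hypothesis Hdown : forall u w, e u w -> pos w < pos u -> u \in s /\ w = nth x0 s (pos u).-1.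
Hypothesis Hcons : forall i, i.+1 < size s -> e (nth x0 s i) (nth x0 s i.+1).

Notation sp i := (nth x0 s i).

Lemma step_inv m c' (R : rstate T m) M j w' : valid_rmove e c' R M ->
  after_round c' R M j = Some w' ->
  exists w, [/\ R j = Some w, w != c', w' != c' & adjr e w w'].
Proof.
move=> /forallP/(_ j); rewrite ffunE; case: (R j) => // w.
case: eqP => // /eqP wc /= va; case: eqP => // /eqP mc [<-]; exists w; split => //.
Qed.

Lemma keep i w w' : i <= pos w -> w != sp i -> adjr e w w' -> i <= pos w'.
Proof.
move=> iw wi /orP[/eqP <-//|ew]; rewrite leqNgt; apply/negP => wi'.
have lt : pos w' < pos w := leq_trans wi' iw.
have [us w'e] := Hdown ew lt.
have pw' : pos w' = (pos w).-1 by rewrite w'e Hsp // (leq_ltn_trans (leq_pred _) (Hpos w)).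
have : pos w != i by apply: contra wi => /eqP <-; rewrite Hin.
move: wi' iw; rewrite pw'; lia.
Qed.

Lemma leafstay w w' : w' \notin s -> adjr e w w' -> w != sp (pos w') -> w = w'.
Proof.
move=> ns /orP[/eqP//|ew] nw; have [_ H] := Hleaf ns.
by move: nw; rewrite (H w) ?eqxx // sym.
Qed.

Variable m : nat.
Definition InvC i (R : rstate T m) := forall j w, R j = Some w -> i <= pos w /\ w != sp i.
Definition occ i (R : rstate T m) : {set T} :=
  [set w | [&& w \notin s, pos w == i & [exists j, R j == Some w]]].
Definition Phi i (R : rstate T m) := (size s - i.+1) * (2 * #|T| + 1) + 2 * #|occ i R|.

Lemma cw_allc k c (R : rstate T m) : all_captured R -> cop_wins e k c R.
Proof. by case: k => [|k] /= ->. Qed.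

Lemma allcap i R : InvC i R -> occ i R = set0 -> size s <= i.+1 -> all_captured R.
Proof.
move=> HI oe si; apply/forallP => j; case E: (R j) => [w|//].
have [iw wi] := HI j w E.
have pw : pos w = i by apply/eqP; rewrite eqn_leq iw -ltnS (leq_trans (Hpos w) si).
have ws : w \notin s by apply: contra wi => ws; rewrite -pw Hin.
have : w \in occ i R by rewrite inE ws pw eqxx /=; apply/existsP; exists j; rewrite E.
by rewrite oe inE.
Qed.

Lemma strat K : forall k i (R : rstate T m), k <= K -> i < size s -> InvC i R -> Phi i R <= k ->
  cop_wins e k (sp i) R.
Proof.
elim: K => [|K IH] k i R kK iS HI hP.
  apply: cw_allc; apply: (allcap HI).
    by apply/eqP; rewrite -cards_eq0; move: hP kK; rewrite /Phi; nia.
  by move: hP kK; rewrite /Phi; nia.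
case: (set_0Vmem (occ i R)) => [oe|[l lo]].
  case: (ltnP i.+1 (size s)) => si; last exact/cw_allc/(allcap HI).
  have cz : #|occ i R| = 0 by rewrite oe cards0.
  case: k kK hP => [|k1] kK hP; first by move: hP; rewrite /Phi cz; nia.
  rewrite /=; apply/orP; right; apply/existsP; exists (sp i.+1).
  rewrite /adjr Hcons // orbT /=; apply/forallP => M; apply/implyP => vM.
  apply: IH => //.
  - move=> j w1 /(step_inv vM) [w0 [E0 n0 n1 a01]]; split => //.
    have [iw0 w0i] := HI j w0 E0.
    have pw0 : pos w0 != i.
      apply/negP => /eqP pw0.
      have ws : w0 \notin s by apply: contra w0i => ws; rewrite -pw0 Hin.
      have : w0 \in occ i R by rewrite inE ws pw0 eqxx /=; apply/existsP; exists j; rewrite E0.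
      by rewrite oe inE.
    apply: (keep _ n0 a01); rewrite ltn_neqAle eq_sym pw0 iw0 //.
  - have := max_card (occ i.+1 (after_round (sp i.+1) R M)).
    move: hP; rewrite /Phi cz => hP hc.
    move: hc hP; have := arB1 #|T| si.
    set X := (size s - i.+2) * _; set Y := (size s - i.+1) * _; lia.
have [lns /andP[/eqP ls _]] : l \notin s /\ (pos l == i) && true.
  by move: lo; rewrite inE => /and3P[-> -> _].
have [el _] := Hleaf lns; rewrite ls in el.
have c1 : 0 < #|occ i R| by apply/card_gt0P; exists l.
case: k kK hP => [|[|k2]] kK hP; try by move: hP; rewrite /Phi; nia.
rewrite /=; apply/orP; right; apply/existsP; exists l.
rewrite /adjr sym el orbT /=; apply/forallP => M; apply/implyP => vM.
apply/orP; right; apply/existsP; exists (sp i).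
rewrite /adjr el orbT /=; apply/forallP => M'; apply/implyP => vM'.
set R1 := after_round l R M; set R2 := after_round (sp i) R1 M'.
have trace : forall j w2, R2 j = Some w2 -> exists w0,
    [/\ R j = Some w0, w0 != l, i <= pos w2, w2 != sp i & (w2 \notin s -> pos w2 = i -> w0 = w2)].
  move=> j w2 /(step_inv vM') [w1 [E1 n1 n2 a12]].
  have [w0 [E0 n0 n1' a01]] := step_inv vM E1.
  have [iw0 w0i] := HI j w0 E0.
  have iw1 := keep iw0 w0i a01.
  exists w0; split => //; first exact: keep iw1 n1 a12.
  move=> ns pw2.
  have w12 : w1 = w2 by apply: leafstay => //; rewrite pw2.
  subst w1; apply: leafstay => //; rewrite pw2 //.
apply: IH => //.
- by move: kK; lia.
- by move=> j w2 /trace [w0 [_ _ ? ? _]].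
- have sub : occ i R2 \subset occ i R :\ l.
    apply/subsetP => w; rewrite !inE => /and3P[ns /eqP pw /existsP[j /eqP Ej]].
    have [w0 [E0 n0 _ _ H]] := trace j w Ej.
    have ew := H ns pw; subst w0.
    rewrite n0 ns pw eqxx /=; apply/existsP; exists j; by rewrite E0.
  have := subset_leq_card sub; have := cardsD1 l (occ i R); rewrite lo.
  move: hP; rewrite /Phi; set X := (size s - i.+1) * _; lia.
Qed.

Lemma cop_bound : 0 < size s -> capt_le e m ((size s).-1 * (2 * #|T| + 1) + 2 * #|T|).
Proof.
move=> s0; apply/existsP; exists (sp 0); apply/forallP => R0.
apply: (@strat _ _ 0) => //.
- move=> j w; rewrite ffunE; case: eqP => // /eqP nw [<-]; split => //.
- rewrite /Phi subn1; have := max_card (occ 0 (initial_state (sp 0) R0)); lia.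
Qed.
End CopStrat.

Section Final.
Variables (T : finType) (e : rel T).
Hypothesis sym : symmetric e.
Hypothesis irr : irreflexive e.
Hypothesis conn : forall x y : T, connect e x y.
Hypothesis acyc : forall p : seq T, uniq p -> 3 <= size p -> ~~ cycle e p.

Lemma leaf_uniq w u u' : is_leaf e w -> e w u -> e w u' -> u' = u.
Proof.
rewrite /is_leaf /deg => /cards1P[z hz] h1 h2.
have : u \in [set y | e w y] by rewrite inE.
have : u' \in [set y | e w y] by rewrite inE.
by rewrite hz !inE => /eqP -> /eqP ->.
Qed.

Lemma has_nb w : is_leaf e w -> exists u, e w u.
Proof.
rewrite /is_leaf /deg => /eqP h; have : 0 < #|[set y | e w y]| by rewrite h.
by case/card_gt0P => u; rewrite inE; exists u.
Qed.

Lemma path_closed (A : pred T) : (forall x y, A x -> e x y -> A y) ->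
  forall q x, A x -> path e x q -> A (last x q).
Proof. by move=> H; elim=> [//|y q IH] x /= ax /andP[exy pq]; apply: IH (H _ _ ax exy) pq. Qed.

Lemma two_leaves w u : e w u -> is_leaf e w -> is_leaf e u -> forall x, x = w \/ x = u.
Proof.
move=> ewu lw lu x; have /connectP[q pq ->] := conn w x.
suff : (last w q == w) || (last w q == u) by case/orP => /eqP; [left|right].
apply: (path_closed (A := fun x => (x == w) || (x == u))) pq; last by rewrite eqxx.
move=> y z /orP[] /eqP -> eyz.
  by rewrite (leaf_uniq lw ewu eyz) eqxx orbT.
by rewrite (leaf_uniq lu (_ : e u w) eyz) ?eqxx // sym.
Qed.

Lemma cat_bound (x : T) : caterpillar e -> exists B, forall m, capt_le e m B.
Proof.
case=> p [up pl pe].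
have lp w : w \notin p -> is_leaf e w by move=> wp; move: (pl w); rewrite (negbTE wp) => /esym/negbFE.
case: p up pl pe lp => [|h t] up pl pe lp.
  have al y : is_leaf e y by apply: lp.
  have [b eab] := has_nb (al x).
  exists ((size [:: x]).-1 * (2 * #|T| + 1) + 2 * #|T|) => m.
  apply: (@cop_bound T e x [:: x] (fun _ => 0) sym) => //.
  - by move=> j; rewrite ltnS leqn0 => /eqP ->.
  - by move=> w; rewrite inE => /eqP ->.
  - move=> w; rewrite inE => wx /=.
    have wb : w = b by case: (two_leaves eab (al x) (al b) w) => // h; move: wx; rewrite h eqxx.
    subst w; split; first by rewrite sym.
    by move=> u ebu; apply: (leaf_uniq (al b) _ ebu); rewrite sym.
set p := h :: t.
pose nb w := odflt w [pick u | e w u].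
pose pos w := if w \in p then index w p else index (nb w) p.
have nbP w : w \notin p -> e w (nb w) /\ nb w \in p.
  move=> wp; have lw := lp w wp.
  rewrite /nb; case: pickP => [u euw|H]; last first.
    by have [u eu] := has_nb lw; move: (H u); rewrite eu.
  split => //=; apply/negPn/negP => up'.
  have lu := lp u up'.
  have hp : h \in p := mem_head h t.
  by have := pl h; rewrite hp => /esym; case: (two_leaves euw lw lu h) => ->; [rewrite lw|rewrite lu].
exists ((size p).-1 * (2 * #|T| + 1) + 2 * #|T|) => m.
apply: (@cop_bound T e h p pos sym) => //.
- move=> w; rewrite /pos; case: ifP => wp; rewrite index_mem //; exact: (nbP w (negbT wp)).2.
- by move=> j hj; rewrite /pos mem_nth // index_uniq.
- by move=> w wp; rewrite /pos wp nth_index.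
- move=> w wp; rewrite /pos (negbTE wp) nth_index; last exact: (nbP w wp).2.
  have [ew _] := nbP w wp; split => // u ewu; exact: leaf_uniq (lp w wp) ew ewu.
- move=> u w euw; rewrite /pos.
  case: (boolP (u \in p)) => up'; case: (boolP (w \in p)) => wp.
  + rewrite pe // in euw => lt; split => //.
    case/orP: euw => /eqP hh; first by move: lt; rewrite hh ltnNge leqnSn.
    by rewrite hh /= nth_index.
  + have [ew _] := nbP w wp.
    have -> : u = nb w by apply: leaf_uniq (lp w wp) ew _; rewrite sym.
    by rewrite ltnn.
  + have [eu _] := nbP u up'.
    have -> : w = nb u by apply: leaf_uniq (lp u up') eu euw.
    by rewrite ltnn.
  + have [eu nbp] := nbP u up'.
    have wnb : w = nb u by apply: leaf_uniq (lp u up') eu euw.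
    by move: wp; rewrite wnb nbp.
- move=> i hi; rewrite pe ?mem_nth // ?index_uniq // ?eqxx //; exact: ltnW.
Qed.
End Final.

Theorem mainTheorem13 (T : finType) (e : rel T) :
  symmetric e -> irreflexive e -> is_tree e ->
  (strong_cop_win e <-> caterpillar e).
Proof.
move=> sym irr [c0 [conn acyc]].
have [x _] : exists x : T, true by case/card_gt0P: c0 => x _; exists x.
split; last first.
  move=> cat; have [B HB] := cat_bound sym conn x cat; exact: (@strong_of_bound T e x B HB).
move=> st; apply: (cat_of_noclaw sym irr conn acyc).
move=> o a b c eoa eob eoc dab dac dbc Na Nb Nc.
have eao : e a o by rewrite sym.
have [a' eaa' na] := other_nb eao Na.
have ebo : e b o by rewrite sym.
have [b' ebb' nb] := other_nb ebo Nb.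
have eco : e c o by rewrite sym.
have [c' ecc' nc] := other_nb eco Nc.
have doa' : o != a' by rewrite eq_sym.
have dob' : o != b' by rewrite eq_sym.
have doc' : o != c' by rewrite eq_sym.
apply: (not_strong _ st).
exact: (robbers_capt (yinj7 sym irr acyc eoa eob eoc eaa' ebb' ecc' dab dac dbc doa' dob' doc')
                     (yedge7 sym eoa eob eoc eaa' ebb' ecc')
                     (ynon7 sym irr acyc eoa eob eoc eaa' ebb' ecc' dab dac dbc doa' dob' doc')).
Qed.
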